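(* Let $d_1,d_2\in\mathbb{N}$ and let $X,Y\in\mathcal{M}_{d_1}\otimes\mathcal{M}_{d_1}$ be Hermitian operators such that there exists $\ket{\alpha}\in\mathbb{C}^{d_1}\otimes\mathbb{C}^{d_1}$ with $\bra{\alpha}X\ket{\alpha}=0$ and $\bra{\alpha}Y\ket{\alpha}>0$. Let \[ Z_{A_1B_1A_2B_2} = X_{A_1B_1}\otimes(\mathbb{1}-\omega)_{A_2B_2} + Y_{A_1B_1}\otimes \omega_{A_2B_2} \] on $\mathbb{C}^{d_1}\otimes\mathbb{C}^{d_1}\otimes\mathbb{C}^{d_2}\otimes\mathbb{C}^{d_2}$ (factors labelled $A_1,B_1,A_2,B_2$), where $\omega$ is the maximally entangled projector on $\mathbb{C}^{d_2}\otimes\mathbb{C}^{d_2}$. Then for any $d_2'\in\mathbb{N}$ and any linear map $\mathcal{L}:\mathcal{M}_{d_2}\to\mathcal{M}_{d_2'}$ that is not completely positive, \[ (\mathrm{id}_{A_1}\otimes\mathrm{id}_{B_1}\otimes\mathcal{L}_{A_2}\otimes\mathrm{id}_{B_2})(Z_{A_1B_1A_2B_2}) \] is not positive semidefinite.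
   Context: $\mathcal{M}_d$ denotes complex $d\times d$ matrices. $\omega=\ket{\Omega}\bra{\Omega}$ with $\ket{\Omega}=\frac{1}{\sqrt{d_2}}\sum_{i=1}^{d_2}\ket{i}\otimes\ket{i}$. A linear map $\mathcal{L}:\mathcal{M}_{d}\to\mathcal{M}_{d'}$ is completely positive if $\mathrm{id}_k\otimes\mathcal{L}$ maps positive semidefinite matrices to positive semidefinite matrices for every $k\in\mathbb{N}$. *)

(* Defs.v *)
From HB Require Import structures.
From mathcomp Require Import all_boot all_order all_algebra.
From mathcomp Require Import sesquilinear.
From mathcomp Require Import mxtens.
Set Implicit Arguments. Unset Strict Implicit. Unset Printing Implicit Defensive.
Import Order.TTheory GRing.Theory Num.Theory.
Local Open Scope ring_scope.

Section Defs.
Variable C : numClosedFieldType.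

Definition adjmx m n (A : 'M[C]_(m, n)) : 'M[C]_(n, m) := map_mx Num.conj A^T.

Definition qform n (M : 'M[C]_n) (v : 'cV[C]_n) : C := (adjmx v *m M *m v) 0 0.

(* positive semidefinite: <v|M|v> is a nonnegative real for every v *)
Definition psdmx n (M : 'M[C]_n) : Prop := forall v : 'cV[C]_n, 0 <= qform M v.

(* |Omega> = d^{-1/2} sum_i |i>|i> in C^d (x) C^d (Kronecker index via mxtens_index) *)
Definition Omega_vec d : 'cV[C]_(d * d) :=
  \col_(k < d * d) (if (mxtens_unindex k).1 == (mxtens_unindex k).2
          then (sqrtC (d%:R : C))^-1 else 0).

Definition omega d : 'M[C]_(d * d) := Omega_vec d *m adjmx (Omega_vec d).

(* (id_k (x) L)(M) for M on C^k (x) C^d *)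
Definition idtensL k d d' (L : 'M[C]_d -> 'M[C]_d') (M : 'M[C]_(k * d))
  : 'M[C]_(k * d') :=
  \matrix_(i, j)
    L (\matrix_(p, q) M (mxtens_index ((mxtens_unindex i).1, p))
                        (mxtens_index ((mxtens_unindex j).1, q)))
      (mxtens_unindex i).2 (mxtens_unindex j).2.

(* (id_a (x) L (x) id_c)(M) for M on C^a (x) (C^d (x) C^c) *)
Definition midL a d d' c (L : 'M[C]_d -> 'M[C]_d') (M : 'M[C]_(a * (d * c)))
  : 'M[C]_(a * (d' * c)) :=
  \matrix_(i, j)
    let: (i1, i23) := mxtens_unindex i in
    let: (i2, i3) := mxtens_unindex i23 in
    let: (j1, j23) := mxtens_unindex j in
    let: (j2, j3) := mxtens_unindex j23 in
    L (\matrix_(p, q) M (mxtens_index (i1, mxtens_index (p, i3)))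
                        (mxtens_index (j1, mxtens_index (q, j3)))) i2 j2.

Definition completely_positive d d' (L : 'M[C]_d -> 'M[C]_d') : Prop :=
  forall (k : nat) (M : 'M[C]_(k * d)), psdmx M -> psdmx (idtensL L M).

End Defs.

(* Main.v *)
Require Import Defs.
From HB Require Import structures.
From mathcomp Require Import all_boot all_order all_algebra.
From mathcomp Require Import sesquilinear spectral.
From mathcomp Require Import mxtens ring.
Import Order.TTheory GRing.Theory Num.Theory.
Local Open Scope ring_scope.
Local Open Scope sesquilinear_scope.

Section H.
Variable C : numClosedFieldType.

Lemma qformE n (M : 'M[C]_n) v :
  qform M v = \sum_i \sum_j (v i 0)^* * M i j * v j 0.
Proof.
rewrite /qform mxE exchange_big /=; apply: eq_bigr => j _.
rewrite mxE mulr_suml; apply: eq_bigr => i _.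
by rewrite /adjmx !mxE.
Qed.

Lemma sum_tens (R : nmodType) m n (F : 'I_(m * n) -> R) :
  \sum_k F k = \sum_(i < m) \sum_(j < n) F (mxtens_index (i, j)).
Proof.
rewrite pair_big /=.
rewrite (reindex (@mxtens_index m n)) /=; last first.
  by exists (@mxtens_unindex m n) => x _; rewrite (mxtens_indexK, mxtens_unindexK).
by apply: eq_bigr => -[i j].
Qed.

Lemma sum_delta_r n (F : 'I_n -> C) i : \sum_l F l * (l == i)%:R = F i.
Proof.
rewrite (bigD1 i) //= eqxx mulr1 big1 ?addr0 // => l /negbTE ->.
by rewrite mulr0.
Qed.

Lemma sum_delta_l n (F : 'I_n -> C) i : \sum_l (l == i)%:R * F l = F i.
Proof. by rewrite -[RHS](@sum_delta_r _ F i); apply: eq_bigr => l _; rewrite mulrC. Qed.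

Lemma qform_two n (A : 'M[C]_n) i j c :
  qform A (\col_k ((k == i)%:R + c * (k == j)%:R)) =
  A i i + c * A i j + c^* * A j i + c^* * c * A j j.
Proof.
have E : forall (f : 'I_n -> 'I_n -> C) x y, \sum_k \sum_l ((k == x)%:R * f k l * (l == y)%:R) = f x y.
  move=> f x y; under eq_bigr do rewrite sum_delta_r.
  by rewrite sum_delta_l.
rewrite qformE.
transitivity (\sum_k \sum_l ((k==i)%:R * A k l * (l==i)%:R + (k==i)%:R * (c*A k l) * (l==j)%:R
   + (k==j)%:R*(c^* * A k l)*(l==i)%:R + (k==j)%:R * (c^* * c * A k l) * (l==j)%:R)).
  apply: eq_bigr => k _; apply: eq_bigr => l _.
  rewrite !mxE rmorphD rmorphM /= !conjC_nat; ring.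
under eq_bigr do rewrite !big_split /=.
rewrite !big_split /= !E.
by [].
Qed.

Lemma psd_herm n (A : 'M[C]_n) : psdmx A -> A \is hermsymmx.
Proof.
move=> hA; apply/is_hermitianmxP; rewrite expr0 scale1r.
have R : forall v, (qform A v)^* = qform A v.
  by move=> v; apply: conj_Creal; apply: ger0_real; apply: hA.
apply/matrixP => i j; rewrite !mxE.
have Rii : (A i i)^* = A i i.
  have := R (\col_k ((k == i)%:R + 0 * (k == i)%:R)).
  by rewrite qform_two !mul0r rmorph0 !mul0r !addr0.
have Rjj : (A j j)^* = A j j.
  have := R (\col_k ((k == j)%:R + 0 * (k == j)%:R)).
  by rewrite qform_two !mul0r rmorph0 !mul0r !addr0.
have E1 := R (\col_k ((k == i)%:R + 1 * (k == j)%:R)).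
rewrite qform_two rmorph1 !mul1r !rmorphD /= Rii Rjj in E1.
have E2 := R (\col_k ((k == i)%:R + 'i * (k == j)%:R)).
rewrite qform_two !rmorphD !rmorphM /= conjCi Rii Rjj in E2.
have ii : 'i * 'i = -1 :> C by rewrite -expr2 sqrCi.
have ii' : - 'i * 'i = 1 :> C by rewrite mulNr ii opprK.
rewrite rmorphN /= conjCi opprK in E2.
have F2 : 'i * ((A j i)^* - (A i j)^* - A i j + A j i) = 0.
  have -> : 'i * ((A j i)^* - (A i j)^* - A i j + A j i) =
    (A i i + - 'i * (A i j)^* + 'i * (A j i)^* + 'i * - 'i * A j j) -
    (A i i + 'i * A i j + - 'i * A j i + - 'i * 'i * A j j) by ring.
  by rewrite E2 subrr.
have F1 : (A i j)^* + (A j i)^* - A i j - A j i = 0.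
  have -> : (A i j)^* + (A j i)^* - A i j - A j i =
    (A i i + (A i j)^* + (A j i)^* + A j j) - (A i i + A i j + A j i + A j j) by ring.
  by rewrite E1 subrr.
move/eqP: F2; rewrite mulf_eq0 (negbTE (neq0Ci _)) /= => /eqP F2.
have : ((A j i)^* - A i j) *+ 2 = 0.
  have -> : ((A j i)^* - A i j) *+ 2 =
     ((A j i)^* - (A i j)^* - A i j + A j i) + ((A i j)^* + (A j i)^* - A i j - A j i) by ring.
  by rewrite F1 F2 addr0.
by move/eqP; rewrite mulrn_eq0 /= subr_eq0 => /eqP ->.
Qed.

Lemma psd_decomp n (A : 'M[C]_n) : psdmx A ->
  exists B : 'M[C]_n, forall i j, A i j = \sum_r (B r i)^* * B r j.
Proof.
move=> hA.
have /hermitian_normalmx /orthomx_spectralP eA := psd_herm _ _ hA.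
have PU := spectral_unitarymx A.
set P := spectralmx A in eA PU; set D := spectral_diag A in eA.
rewrite invmx_unitary // in eA.
have Dpos : forall r, 0 <= D 0 r.
  move=> r; have := hA (P^t* *m delta_mx r 0).
  rewrite /qform /adjmx trmx_mul map_mxM trmxCK eA !mulmxA !mulmxtVK //.
  rewrite -colE trmx_delta.
  have -> : map_mx Num.conj (delta_mx 0 r : 'M[C]_(1, n)) = delta_mx 0 r.
    by apply/matrixP => a b; rewrite !mxE /= conjC_nat.
  by rewrite -rowE !mxE eqxx mulr1n.
exists (\matrix_(r, i) (sqrtC (D 0 r) * P r i)) => i j.
rewrite eA mul_mx_diag !mxE; apply: eq_bigr => r _.
rewrite !mxE rmorphM /= (conj_Creal (sqrtC_real (Dpos r))).
rewrite -[in LHS](sqrtCK (D 0 r)) expr2; ring.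
Qed.

Lemma perm6 A I B J P Q (F : 'I_A -> 'I_I -> 'I_B -> 'I_J -> 'I_P -> 'I_Q -> C) :
 \sum_a \sum_i \sum_b \sum_j \sum_p \sum_q F a i b j p q =
 \sum_i \sum_p \sum_j \sum_q \sum_a \sum_b F a i b j p q.
Proof.
rewrite exchange_big; apply: eq_bigr => i _.
under eq_bigr => a _ do under eq_bigr => b _ do rewrite exchange_big.
under eq_bigr => a _ do rewrite exchange_big.
rewrite exchange_big; apply: eq_bigr => p _.
under eq_bigr => a _ do rewrite exchange_big.
rewrite exchange_big; apply: eq_bigr => j _.
under eq_bigr => a _ do rewrite exchange_big.
by rewrite exchange_big.
Qed.

Definition Jm d d' (L : 'M[C]_d -> 'M[C]_d') : 'M[C]_(d' * d) :=
  \matrix_(x, y) L (delta_mx (mxtens_unindex x).2 (mxtens_unindex y).2)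
      (mxtens_unindex x).1 (mxtens_unindex y).1.
Arguments Jm {d d'} L.

Lemma qformD_sum n I (r : seq I) (Ms : I -> 'M[C]_n) v :
  qform (\sum_(i <- r) Ms i) v = \sum_(i <- r) qform (Ms i) v.
Proof.
rewrite /qform mulmx_sumr mulmx_suml summxE; apply: eq_bigr => i _.
by rewrite mxE.
Qed.

Lemma idtensL_sum k d d' (L : {linear 'M[C]_d -> 'M[C]_d'}) I (r : seq I)
  (Ms : I -> 'M[C]_(k * d)) :
  idtensL L (\sum_(i <- r) Ms i) = \sum_(i <- r) idtensL L (Ms i).
Proof.
apply/matrixP => x y; rewrite !mxE summxE.
under [in RHS]eq_bigr do rewrite mxE.
set a := (mxtens_unindex x).1; set b := (mxtens_unindex y).1.
have -> : \matrix_(p, q) (\sum_(i <- r) Ms i) (mxtens_index (a, p)) (mxtens_index (b, q))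
   = \sum_(i <- r) \matrix_(p, q) Ms i (mxtens_index (a, p)) (mxtens_index (b, q)).
  by apply/matrixP => p q; rewrite !mxE !summxE; apply: eq_bigr => i _; rewrite mxE.
by rewrite linear_sum summxE.
Qed.

Lemma idtensL_E k d d' (L : {linear 'M[C]_d -> 'M[C]_d'}) (N : 'M[C]_(k * d)) a i b j :
  idtensL L N (mxtens_index (a, i)) (mxtens_index (b, j)) =
  \sum_p \sum_q N (mxtens_index (a, p)) (mxtens_index (b, q)) * L (delta_mx p q) i j.
Proof.
rewrite mxE !mxtens_indexK /=.
rewrite [X in L X](matrix_sum_delta) linear_sum summxE; apply: eq_bigr => p _.
rewrite linear_sum summxE; apply: eq_bigr => q _.
by rewrite linearZ !mxE.
Qed.

Lemma choi d d' (L : {linear 'M[C]_d -> 'M[C]_d'}) :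
  psdmx (Jm L) -> completely_positive L.
Proof.
move=> hJ k M hM v.
have [B hB] := psd_decomp _ _ hM.
have -> : M = \sum_r \matrix_(x, y) ((B r x)^* * B r y).
  by apply/matrixP => x y; rewrite hB summxE; apply: eq_bigr => r _; rewrite mxE.
rewrite idtensL_sum qformD_sum; apply: sumr_ge0 => r _.
set z : 'cV[C]_(d' * d) := \col_x (\sum_b v (mxtens_index (b, (mxtens_unindex x).1)) 0
                  * B r (mxtens_index (b, (mxtens_unindex x).2))).
suff -> : qform (idtensL L (\matrix_(x, y) ((B r x)^* * B r y))) v = qform (Jm L) z.
  exact: hJ.
rewrite !qformE sum_tens.
under eq_bigr => a _ do under eq_bigr => i _ do rewrite sum_tens.
rewrite sum_tens.
under [RHS]eq_bigr => i _ do under eq_bigr => p _ do rewrite (sum_tens _ d' d).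
transitivity (\sum_a \sum_i \sum_b \sum_j \sum_p \sum_q
   ((v (mxtens_index (a, i)) 0)^* * (B r (mxtens_index (a, p)))^* * L (delta_mx p q) i j
    * v (mxtens_index (b, j)) 0 * B r (mxtens_index (b, q)))).
  apply: eq_bigr => a _; apply: eq_bigr => i _; apply: eq_bigr => b _; apply: eq_bigr => j _.
  rewrite idtensL_E mulr_sumr mulr_suml; apply: eq_bigr => p _.
  rewrite mulr_sumr mulr_suml; apply: eq_bigr => q _.
  rewrite !mxE; ring.
rewrite perm6.
apply: eq_bigr => i _; apply: eq_bigr => p _; apply: eq_bigr => j _; apply: eq_bigr => q _.
rewrite !mxE !mxtens_indexK /= rmorph_sum /= !mulr_suml; apply: eq_bigr => a _.
rewrite mulr_sumr; apply: eq_bigr => b _.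
rewrite rmorphM /=; ring.
Qed.

Definition G d d' c (L : 'M[C]_d -> 'M[C]_d') (N : 'M[C]_(d * c)) : 'M[C]_(d' * c) :=
  \matrix_(x, y) L (\matrix_(p, q) N (mxtens_index (p, (mxtens_unindex x).2))
                                    (mxtens_index (q, (mxtens_unindex y).2)))
      (mxtens_unindex x).1 (mxtens_unindex y).1.
Arguments G {d d' c} L N.

Lemma midL_E a d d' c (L : {linear 'M[C]_d -> 'M[C]_d'}) (X Y : 'M[C]_a)
   (N1 N2 : 'M[C]_(d * c)) i1 j1 x y :
  midL L (X *t N1 + Y *t N2) (mxtens_index (i1, x)) (mxtens_index (j1, y)) =
  X i1 j1 * G L N1 x y + Y i1 j1 * G L N2 x y.
Proof.
case: (mxtens_indexP x) => i2 i3; case: (mxtens_indexP y) => j2 j3.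
rewrite !mxE !mxtens_indexK /=.
set M1 := \matrix_(p, q) N1 (mxtens_index (p, i3)) (mxtens_index (q, j3)).
set M2 := \matrix_(p, q) N2 (mxtens_index (p, i3)) (mxtens_index (q, j3)).
have -> : \matrix_(p, q) (X *t N1 + Y *t N2) (mxtens_index (i1, mxtens_index (p, i3)))
                                           (mxtens_index (j1, mxtens_index (q, j3)))
   = X i1 j1 *: M1 + Y i1 j1 *: M2.
  by apply/matrixP => p q; rewrite !mxE !mxtens_indexK.
by rewrite linearD !linearZ !mxE.
Qed.

Lemma sum4_mul I J K L' (f : 'I_I -> 'I_J -> C) (g : 'I_K -> 'I_L' -> C) :
  (\sum_i \sum_j f i j) * (\sum_k \sum_l g k l) =
  \sum_i \sum_k \sum_j \sum_l (f i j * g k l).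
Proof.
rewrite mulr_suml; apply: eq_bigr => i _.
rewrite mulr_suml; under eq_bigr => j _ do rewrite mulr_sumr.
rewrite exchange_big; apply: eq_bigr => k _; apply: eq_bigr => j _.
by rewrite mulr_sumr.
Qed.

Lemma qformZ n (M : 'M[C]_n) c v : qform (c *: M) v = c * qform M v.
Proof.
rewrite !qformE mulr_sumr; apply: eq_bigr => i _; rewrite mulr_sumr.
by apply: eq_bigr => j _; rewrite mxE; ring.
Qed.

Lemma qform_main a d d' c (L : {linear 'M[C]_d -> 'M[C]_d'}) (X Y : 'M[C]_a)
   (N1 N2 : 'M[C]_(d * c)) (al : 'cV[C]_a) (w : 'cV[C]_(d' * c)) :
  qform (midL L (X *t N1 + Y *t N2))
     (\col_x (al (mxtens_unindex x).1 0 * w (mxtens_unindex x).2 0)) =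
  qform X al * qform (G L N1) w + qform Y al * qform (G L N2) w.
Proof.
rewrite !qformE !sum4_mul (sum_tens _ a (d' * c)).
rewrite -big_split; apply: eq_bigr => x1 _.
under eq_bigr => x _ do rewrite (sum_tens _ a (d' * c)).
rewrite -big_split; apply: eq_bigr => x _.
rewrite -big_split; apply: eq_bigr => y1 _.
rewrite -big_split; apply: eq_bigr => y _.
rewrite midL_E !mxE !mxtens_indexK /= rmorphM /=; ring.
Qed.

Lemma G_omega d d' (L : {linear 'M[C]_d -> 'M[C]_d'}) :
  G L (omega C d) = ((sqrtC (d%:R : C))^-1 * ((sqrtC (d%:R : C))^-1)^*) *: Jm L.
Proof.
apply/matrixP => x y; rewrite !mxE.
set c := (sqrtC (d%:R : C))^-1 * _.
have -> : \matrix_(p, q) omega C d (mxtens_index (p, (mxtens_unindex x).2))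
                          (mxtens_index (q, (mxtens_unindex y).2))
   = c *: delta_mx (mxtens_unindex x).2 (mxtens_unindex y).2.
  apply/matrixP => p q; rewrite /omega !mxE big_ord1 !mxE !mxtens_indexK /=.
  by case: (p == _); case: (q == _); rewrite /= ?rmorph0 ?mulr0 ?mul0r ?mulr1.
by rewrite linearZ mxE.
Qed.

Lemma c_gt0 d : (0 < d)%N ->
  0 < (sqrtC (d%:R : C))^-1 * ((sqrtC (d%:R : C))^-1)^*.
Proof.
move=> hd; rewrite -normCK exprn_gt0 // normr_gt0 invr_eq0 sqrtC_eq0.
by rewrite pnatr_eq0 -lt0n.
Qed.

Lemma psd_empty d' (L : {linear 'M[C]_0 -> 'M[C]_d'}) : psdmx (Jm L).
Proof.
by move=> w; rewrite qformE sum_tens big1 // => i _; rewrite big_ord0.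
Qed.

End H.

Theorem lemma2 (C : numClosedFieldType) (d1 d2 : nat)
  (X Y : 'M[C]_(d1 * d1))
  (hX : X \is hermsymmx) (hY : Y \is hermsymmx)
  (hα : exists alpha : 'cV[C]_(d1 * d1),
          qform X alpha = 0 /\ 0 < qform Y alpha) :
  forall (d2' : nat) (L : {linear 'M[C]_d2 -> 'M[C]_d2'}),
    ~ completely_positive L ->
    ~ psdmx (midL L (X *t (1%:M - omega C d2) + Y *t omega C d2)).
Proof.
move=> d2' L nCP hP; apply: nCP; apply: choi.
case: d2 L hP => [|d2] L hP; first exact: psd_empty.
move=> w; have [al [h0 hpos]] := hα.
have := hP (\col_x (al (mxtens_unindex x).1 0 * w (mxtens_unindex x).2 0)).
rewrite qform_main h0 mul0r add0r G_omega qformZ.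
by rewrite pmulr_rge0 // pmulr_rge0 // c_gt0.
Qed.
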